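(* Let $(W,S)$ be a Coxeter system with $S$ finite, and let $\Bbbk$ be a commutative ring with no $2$-torsion. Let $(\mathfrak{h},\mathfrak{h}^*,\Delta^\vee,\Delta)$ be a realization of $(W,S)$ over $\Bbbk$, and suppose that its Cartan matrix $A=(a_{s,t})_{s,t\in S}$, $a_{s,t}=\langle \alpha_s^\vee,\alpha_t\rangle$, has determinant which is invertible in $\Bbbk$. Then $\Delta$ and $\Delta^\vee$ are each linearly independent. Moreover, as representations of $W$ one has $\mathfrak{h}\cong \Bbbk\cdot\Delta^\vee\oplus T$ for some trivial representation $T$ contained in the common kernel of all $\alpha_s$, $s\in S$; similarly $\mathfrak{h}^*\cong \Bbbk\cdot \Delta\oplus T^*$ for a trivial representation $T^*$ (contained in the common kernel of all $\alpha_s^\vee$).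
   Context: A (simple) realization of a Coxeter system $(W,S)$ over $\Bbbk$ is a free $\Bbbk$-module $\mathfrak{h}$ of finite rank together with subsets $\Delta^\vee=\{\alpha_s^\vee : s\in S\}\subset\mathfrak{h}$ (simple coroots) and $\Delta=\{\alpha_s : s\in S\}\subset \mathfrak{h}^*=\mathrm{Hom}_\Bbbk(\mathfrak{h},\Bbbk)$ (simple roots) such that $\langle\alpha_s^\vee,\alpha_s\rangle=2$ for all $s\in S$, and the assignment $s(v)=v-\langle v,\alpha_s\rangle\alpha_s^\vee$ for $v\in\mathfrak{h}$ defines a representation of $W$ on $\mathfrak{h}$. The contragredient action on $\mathfrak{h}^*$ is $s(f)=f-\langle\alpha_s^\vee,f\rangle\alpha_s$. Here $\Bbbk\cdot\Delta^\vee$ denotes the $\Bbbk$-span of $\Delta^\vee$, and similarly for $\Delta$. *)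

(* Defs.v *)
From HB Require Import structures.
From mathcomp Require Import all_boot all_order all_algebra.
Set Implicit Arguments. Unset Strict Implicit. Unset Printing Implicit Defensive.
Import GRing.Theory.
Local Open Scope ring_scope.

(* h = k^n (free k-module of rank n), h^* = Hom(h,k) identified with k^n via
   the dual basis; the pairing <v, f> is the standard one. *)
Definition pairing (k : comPzRingType) (n : nat) (v f : 'rV[k]_n) : k :=
  \sum_(i < n) v 0 i * f 0 i.

(* Coxeter matrix on a finite set S; m s t = 0 encodes m_{s,t} = infinity. *)
Definition coxeter_matrix (S : finType) (m : S -> S -> nat) : Prop :=
  (forall s, m s s = 1%N) /\ (forall s t, m s t = m t s) /\
  (forall s t, s != t -> m s t != 1%N).

Definition refl_h (k : comPzRingType) (n : nat) (S : finType)
  (cor rt : S -> 'rV[k]_n) (s : S) (v : 'rV[k]_n) : 'rV[k]_n :=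
  v - pairing v (rt s) *: cor s.

Definition refl_hd (k : comPzRingType) (n : nat) (S : finType)
  (cor rt : S -> 'rV[k]_n) (s : S) (f : 'rV[k]_n) : 'rV[k]_n :=
  f - pairing (cor s) f *: rt s.

(* Realization of the Coxeter system with Coxeter matrix m: <a_s^v, a_s> = 2
   and the assignment s |-> refl_h s respects the defining relations
   (st)^{m_st} = 1 (m_st finite) of the Coxeter group W, i.e. defines a
   representation of W on h. *)
Definition realization (k : comPzRingType) (n : nat) (S : finType)
  (m : S -> S -> nat) (cor rt : S -> 'rV[k]_n) : Prop :=
  (forall s, pairing (cor s) (rt s) = 2) /\
  (forall s t v, m s t != 0%N ->
     iter (m s t) (fun w => refl_h cor rt s (refl_h cor rt t w)) v = v).

Definition cartan (k : comPzRingType) (n : nat) (S : finType)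
  (cor rt : S -> 'rV[k]_n) : 'M[k]_#|S| :=
  \matrix_(i, j) pairing (cor (enum_val i)) (rt (enum_val j)).

Definition lin_indep (k : comPzRingType) (n : nat) (S : finType)
  (x : S -> 'rV[k]_n) : Prop :=
  forall c : S -> k, \sum_(s : S) c s *: x s = 0 -> forall s, c s = 0.

Definition in_span (k : comPzRingType) (n : nat) (S : finType)
  (x : S -> 'rV[k]_n) (v : 'rV[k]_n) : Prop :=
  exists c : S -> k, v = \sum_(s : S) c s *: x s.

Definition submodule (k : comPzRingType) (n : nat) (T : 'rV[k]_n -> Prop) : Prop :=
  T 0 /\ (forall u v, T u -> T v -> T (u + v)) /\ (forall a v, T v -> T (a *: v)).

Definition direct_sum_span (k : comPzRingType) (n : nat) (S : finType)
  (x : S -> 'rV[k]_n) (T : 'rV[k]_n -> Prop) : Prop :=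
  (forall v, exists a t, in_span x a /\ T t /\ v = a + t) /\
  (forall v, in_span x v -> T v -> v = 0).

(* Main.v *)
Require Import Defs.
From HB Require Import structures.
From mathcomp Require Import all_boot all_order all_algebra.
Import GRing.Theory.
Local Open Scope ring_scope.

Section Aux.
Variables (k : comPzRingType) (n : nat) (S : finType).

Lemma sum_enum (F : S -> k) :
  \sum_(s : S) F s = \sum_(i < #|S|) F (enum_val i).
Proof.
by rewrite (reindex (@enum_val S predT)) //; exists enum_rank => x _;
  [exact: enum_valK | exact: enum_rankK].
Qed.

Lemma pairingC (v f : 'rV[k]_n) : pairing v f = pairing f v.
Proof. by apply: eq_bigr => i _; rewrite mulrC. Qed.

Lemma pairing_suml (c : S -> k) (x : S -> 'rV[k]_n) f :
  pairing (\sum_s c s *: x s) f = \sum_s c s * pairing (x s) f.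
Proof.
rewrite /pairing.
under eq_bigr => i _ do rewrite summxE mulr_suml.
rewrite exchange_big; apply: eq_bigr => s _; rewrite mulr_sumr.
by apply: eq_bigr => i _; rewrite mxE mulrA.
Qed.

Lemma pairing_subl (u v f : 'rV[k]_n) :
  pairing (u - v) f = pairing u f - pairing v f.
Proof.
rewrite /pairing -sumrB; apply: eq_bigr => i _.
by rewrite !mxE mulrBl.
Qed.

Lemma pairing_addl (u v f : 'rV[k]_n) :
  pairing (u + v) f = pairing u f + pairing v f.
Proof.
rewrite /pairing -big_split; apply: eq_bigr => i _.
by rewrite !mxE mulrDl.
Qed.

Lemma pairing_scalel a (v f : 'rV[k]_n) :
  pairing (a *: v) f = a * pairing v f.
Proof.
rewrite /pairing mulr_sumr; apply: eq_bigr => i _.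
by rewrite !mxE mulrA.
Qed.

Lemma pairing0l (f : 'rV[k]_n) : pairing 0 f = 0.
Proof. by rewrite /pairing big1 // => i _; rewrite mxE mul0r. Qed.

Variables (x y : S -> 'rV[k]_n).
Hypothesis hdet : exists d : k, \det (cartan x y) * d = 1.

Lemma core_inj (c : S -> k) :
  (forall t, \sum_s c s * pairing (x s) (y t) = 0) -> forall s, c s = 0.
Proof.
move=> H.
have [d hd] := hdet.
set G := cartan x y.
set u : 'rV[k]_#|S| := \row_i c (enum_val i).
have uG : u *m G = 0.
  apply/rowP => j; rewrite !mxE.
  transitivity (\sum_s c s * pairing (x s) (y (enum_val j))); last exact: H.
  by rewrite sum_enum; apply: eq_bigr => i _; rewrite !mxE.
have u0 : u = 0.
  have : u *m G *m \adj G = 0 by rewrite uG mul0mx.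
  rewrite -mulmxA mul_mx_adj mul_mx_scalar => e.
  by rewrite -[u]scale1r -hd mulrC -scalerA e scaler0.
move=> s; have := congr1 (fun w : 'rV[k]_#|S| => w 0 (enum_rank s)) u0.
by rewrite /= !mxE enum_rankK.
Qed.

Lemma core_surj (b : S -> k) :
  exists c : S -> k, forall t, \sum_s c s * pairing (x s) (y t) = b t.
Proof.
have [d hd] := hdet.
set G := cartan x y.
set bb : 'rV[k]_#|S| := \row_i b (enum_val i).
set u := d *: (bb *m \adj G).
have uG : u *m G = bb.
  rewrite /u -scalemxAl -mulmxA mul_adj_mx mul_mx_scalar scalerA mulrC hd.
  by rewrite scale1r.
exists (fun s => u 0 (enum_rank s)) => t.
have := congr1 (fun w : 'rV[k]_#|S| => w 0 (enum_rank t)) uG.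
rewrite /= !mxE enum_rankK => <-.
rewrite sum_enum; apply: eq_bigr => i _.
by rewrite enum_valK !mxE enum_rankK.
Qed.

Lemma generic :
  lin_indep x /\
  exists T : 'rV[k]_n -> Prop,
    submodule T /\ direct_sum_span x T /\
    (forall v t, T v -> pairing v (y t) = 0).
Proof.
split.
  move=> c hc; apply: core_inj => t.
  by rewrite -pairing_suml hc pairing0l.
exists (fun v => forall t, pairing v (y t) = 0).
split; [|split; [|by []]].
  split; [by move=> t; rewrite pairing0l|split].
    by move=> u v hu hv t; rewrite pairing_addl hu hv addr0.
  by move=> a v hv t; rewrite pairing_scalel hv mulr0.
split.
  move=> v.
  have [c hc] := core_surj (fun t => pairing v (y t)).
  exists (\sum_s c s *: x s), (v - \sum_s c s *: x s).
  split; [by exists c|split; last by rewrite addrC subrK].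
  by move=> t; rewrite pairing_subl pairing_suml hc subrr.
move=> v [c ->] hv.
have c0 := @core_inj c (fun t => etrans (esym (pairing_suml _ _ _)) (hv t)).
by rewrite big1 // => s _; rewrite c0 scale0r.
Qed.

End Aux.

Theorem mainTheorem1 (k : comPzRingType) (n : nat) (S : finType)
  (m : S -> S -> nat) (cor rt : S -> 'rV[k]_n) :
  coxeter_matrix m ->
  (forall x : k, x *+ 2 = 0 -> x = 0) ->
  realization m cor rt ->
  (exists d : k, \det (cartan cor rt) * d = 1) ->
  lin_indep rt /\ lin_indep cor /\
  (exists T : 'rV[k]_n -> Prop,
     submodule T /\ direct_sum_span cor T /\
     (forall v s, T v -> pairing v (rt s) = 0) /\
     (forall v s, T v -> refl_h cor rt s v = v)) /\
  (exists Td : 'rV[k]_n -> Prop,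
     submodule Td /\ direct_sum_span rt Td /\
     (forall f s, Td f -> pairing (cor s) f = 0) /\
     (forall f s, Td f -> refl_hd cor rt s f = f)).
Proof.
move=> _ _ _ hdet.
have hdet' : exists d : k, \det (cartan rt cor) * d = 1.
  have -> : cartan rt cor = (cartan cor rt)^T.
    by apply/matrixP => i j; rewrite !mxE pairingC.
  by rewrite det_tr.
have [i1 [T [sT [dT aT]]]] := @generic k n S cor rt hdet.
have [i2 [Td [sTd [dTd aTd]]]] := @generic k n S rt cor hdet'.
split; first exact: i2.
split; first exact: i1.
split.
  exists T; do 3 split => //.
  by move=> v s hv; rewrite /refl_h aT // scale0r subr0.
exists Td; do 3 split => //.
  by move=> f s hf; rewrite pairingC aTd.
by move=> f s hf; rewrite /refl_hd pairingC aTd // scale0r subr0.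
Qed.
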